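(* Let $k\ge1$ and $d\ge0$ be integers. If there is a binary self-orthogonal $[g(k,d+4),k,d+4]$ Griesmer code and $g(k,d+4)>2^k$, then $d_{so}(N,k)=d+2$ for every integer $N$ with $g(k,d+2)+1\le N\le g(k,d+4)-1$.
   Context: $g(k,d)=\sum_{i=0}^{k-1}\lceil d/2^i\rceil$. A binary code is self-orthogonal if $C\subseteq C^\perp$; a binary $[n,k,d]$ code is Griesmer if $n=g(k,d)$. $d_{so}(n,k)$ denotes the largest minimum distance among all binary self-orthogonal $[n,k]$ codes. *)

(* Defs.v *)
From HB Require Import structures.
From mathcomp Require Import all_boot all_order all_algebra.
Set Implicit Arguments. Unset Strict Implicit. Unset Printing Implicit Defensive.
Import GRing.Theory.
Local Open Scope ring_scope.

(* Binary linear [n,k] codes are represented by a generator matrix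
   G : 'M['F_2]_(k, n) of full row rank k (row_free G); the code is
   the row space of G. *)

Definition griesmer (k d : nat) : nat :=
  (\sum_(i < k) ((d + 2 ^ i - 1) %/ 2 ^ i))%N.

Definition in_code (k n : nat) (G : 'M['F_2]_(k, n)) (x : 'rV['F_2]_n) : bool :=
  (x <= G)%MS.

Definition wt (n : nat) (x : 'rV['F_2]_n) : nat := #|[set i | x ord0 i != 0%R]|.

(* minimum distance = minimum weight of a nonzero codeword
   (n is returned for the zero code; irrelevant for k >= 1). *)
Definition mindist (k n : nat) (G : 'M['F_2]_(k, n)) : nat :=
  (\big[minn/n]_(x : 'rV['F_2]_n | in_code G x && (x != 0%R)) wt x)%N.

Definition self_orthogonal (k n : nat) (G : 'M['F_2]_(k, n)) : Prop :=
  forall x y : 'rV['F_2]_n, in_code G x -> in_code G y -> (x *m y^T)%R = 0%R.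

Local Close Scope ring_scope.
Definition is_code (k n : nat) (G : 'M['F_2]_(k, n)) : bool := row_free G.

(* d_so(n,k) = d : d is the largest minimum distance among binary
   self-orthogonal [n,k] codes (i.e. attained, and an upper bound). *)
Definition dso_eq (n k d : nat) : Prop :=
  (exists G : 'M['F_2]_(k, n), is_code G /\ self_orthogonal G /\ mindist G = d)
  /\ (forall G : 'M['F_2]_(k, n), is_code G -> self_orthogonal G -> mindist G <= d).

(* Main.v *)
Require Import Defs.
From mathcomp Require Import all_boot all_order all_algebra.
From mathcomp Require Import zify.
Set Implicit Arguments. Unset Strict Implicit. Unset Printing Implicit Defensive.
Import GRing.Theory.

Local Notation F2 := 'F_2.

Lemma griesmer0 d : griesmer 0 d = 0.
Proof. by rewrite /griesmer big_ord0. Qed.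

Lemma griesmerS k w : griesmer k.+1 w = w + griesmer k ((w + 1) %/ 2).
Proof.
rewrite /griesmer big_ord_recl /= expn0 divn1 addnK; congr (_ + _).
apply: eq_bigr => i _.
rewrite expnS divnMA; congr (_ %/ _).
have h : 0 < 2 ^ i by rewrite expn_gt0.
set p := 2 ^ i in h *.
have -> : w + 2 * p - 1 = (w + 1) + (p - 1) * 2 by lia.
rewrite divnDMl; lia.
Qed.

Lemma griesmer_mono k a b : a <= b -> griesmer k a <= griesmer k b.
Proof.
move=> ab; rewrite /griesmer; apply: leq_sum => i _.
apply: leq_div2r; lia.
Qed.

Lemma griesmer_strict k a : 0 < k -> griesmer k a < griesmer k a.+1.
Proof.
case: k => // k _; rewrite !griesmerS.
have := griesmer_mono k (_ : (a + 1) %/ 2 <= (a.+1 + 1) %/ 2); lia.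
Qed.

Lemma griesmer_ge k a : 0 < k -> a <= griesmer k a.
Proof. case: k => // k _; rewrite griesmerS; lia. Qed.

Lemma griesmer1 a : griesmer 1 a = a.
Proof. by rewrite griesmerS griesmer0 addn0. Qed.

Lemma griesmer_diff k b : 1 < k -> griesmer k (4 * b + 4) = griesmer k (4 * b + 2) + 3.
Proof.
case: k => // [[|k]] // _; rewrite !griesmerS.
have -> : (4 * b + 4 + 1) %/ 2 = 2 * b + 2 by lia.
have -> : (4 * b + 2 + 1) %/ 2 = 2 * b + 1 by lia.
have -> : (2 * b + 2 + 1) %/ 2 = b + 1 by lia.
have -> : (2 * b + 1 + 1) %/ 2 = b + 1 by lia.
lia.
Qed.

Section BigMin.
Variables (T : finType) (P : pred T) (F : T -> nat) (n : nat).
Lemma bigmin_le y : P y -> \big[minn/n]_(x | P x) F x <= F y.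
Proof.
move=> Py; rewrite unlock.
have : y \in index_enum T by rewrite mem_index_enum.
elim: (index_enum T) => //= x r IH; rewrite inE => /orP [/eqP <-|yr].
  by rewrite Py geq_minl.
case: (P x); last exact: IH.
by rewrite geq_min IH ?orbT.
Qed.
Lemma bigmin_ge m : m <= n -> (forall x, P x -> m <= F x) -> m <= \big[minn/n]_(x | P x) F x.
Proof.
move=> mn H; apply: (big_ind (fun v => m <= v)) => //.
by move=> a b ha hb; rewrite leq_min ha hb.
Qed.
Lemma bigmin_attained y : P y -> F y <= n -> exists2 z, P z & \big[minn/n]_(x | P x) F x = F z.
Proof.
move=> Py Fyn.
suff [[z Pz ->]|hn] : (exists2 z, P z & \big[minn/n]_(x | P x) F x = F z) \/ \big[minn/n]_(x | P x) F x = n.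
- by exists z.
- by exists y => //; apply/eqP; rewrite eqn_leq bigmin_le // hn Fyn.
rewrite unlock; elim: (index_enum T) => /=; first by right.
move=> x r [[z Pz ->]|->]; case Px: (P x).
- by left; rewrite /minn; case: ltnP => _; [exists x|exists z].
- by left; exists z.
- by rewrite /minn; case: ltnP => _; [left; exists x|right].
- by right.
Qed.
End BigMin.


Section Sets.
Variable T : finType.
Definition sd (A B : {set T}) := (A :\: B) :|: (B :\: A).
Definition lin (C : {set {set T}}) := set0 \in C /\ {in C &, forall x y, sd x y \in C}.

Lemma sd0 (x y : {set T}) : sd x y = set0 -> x = y.
Proof.
move=> h; apply/setP => j; move/setP: h => /(_ j); rewrite !inE.
by case: (j \in x); case: (j \in y).
Qed.

Lemma sdD (x y c : {set T}) : sd (x :\: c) (y :\: c) = sd x y :\: c.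
Proof. apply/setP => j; rewrite !inE; by case: (j \in x); case: (j \in y); case: (j \in c). Qed.

Lemma sd_card (x c : {set T}) : #|sd x c| = #|x :\: c| + #|c :\: x|.
Proof.
have e1 : sd x c :&: c = c :\: x.
  by apply/setP => j; rewrite !inE; case: (j \in x); case: (j \in c).
have e2 : sd x c :\: c = x :\: c.
  by apply/setP => j; rewrite !inE; case: (j \in x); case: (j \in c).
by rewrite -(cardsID c (sd x c)) e1 e2 addnC.
Qed.

Lemma residual (C : {set {set T}}) c : lin C -> c \in C -> c != set0 ->
  (forall x, x \in C -> x != set0 -> #|c| <= #|x|) ->
  [/\ lin [set x :\: c | x in C], #|C| <= 2 * #|[set x :\: c | x in C]| &
    forall y, y \in [set x :\: c | x in C] -> y != set0 -> #|c| <= 2 * #|y| ].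
Proof.
move=> [C0 Csd] cC cn0 cmin.
have zc : forall z, z \in C -> z \subset c -> z = set0 \/ z = c.
  move=> z zC zsub; case: (eqVneq z set0) => [->|zn0]; first by left.
  right; apply/eqP; rewrite eqEcard zsub /=; exact: cmin.
split.
- split; first by apply/imsetP; exists set0 => //; rewrite set0D.
  move=> _ _ /imsetP [x xC ->] /imsetP [y yC ->]; rewrite sdD.
  by apply/imsetP; exists (sd x y) => //; apply: Csd.
- case/set0Pn: cn0 => e ec.
  pose f := fun x : {set T} => (x :\: c, e \in x).
  have finj : {in C &, injective f}.
    move=> x y xC yC [exy bxy].
    have zC := Csd _ _ xC yC.
    have zs : sd x y \subset c.
      apply/subsetP => j; move/setP: exy => /(_ j); rewrite !inE.
      by case: (j \in x); case: (j \in y); case: (j \in c).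
    case: (zc _ zC zs) => [/sd0 //|zeq].
    move: ec; rewrite -zeq !inE bxy; by case: (e \in y).
  rewrite -(card_in_imset finj).
  have -> : 2 * #|[set x :\: c | x in C]| = #|setX [set x :\: c | x in C] [set: bool]|.
    by rewrite cardsX cardsT card_bool mulnC.
  apply: subset_leq_card; apply/subsetP => _ /imsetP [x xC ->].
  by rewrite inE /= in_setT andbT; apply/imsetP; exists x.
- move=> _ /imsetP [x xC ->] yn0.
  have xn0 : x != set0 by apply: contraNneq yn0 => ->; rewrite set0D.
  have xcC := Csd _ _ xC cC.
  have xcn0 : sd x c != set0.
    apply: contraNneq yn0 => /sd0 ->; by rewrite setDv.
  have h1 := cmin _ xC xn0.
  have h2 := cmin _ xcC xcn0.
  rewrite sd_card in h2.
  have h3 := cardsID c x. have h4 := cardsID x c.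
  rewrite setIC in h4. lia.
Qed.

Lemma griesmer_sets k : forall (C : {set {set T}}) (A : {set T}) D, lin C -> 2 ^ k <= #|C| ->
  (forall x, x \in C -> x \subset A) -> (forall x, x \in C -> x != set0 -> D <= #|x|) ->
  griesmer k D <= #|A|.
Proof.
elim: k => [|k IH] C A D linC cardC sub dist; first by rewrite griesmer0.
have : 0 < #|C :\ set0|.
  rewrite lt0n; apply/negP => /eqP h0.
  rewrite (cardsD1 set0 C) h0 expnS in cardC.
  have : 0 < 2 ^ k by rewrite expn_gt0.
  move: cardC; case: (set0 \in C) => /=; lia.
case/card_gt0P => x0 x0C.
pose c := [arg min_(x < x0 in C :\ set0) #|x|].
have [cC cmin] : c \in C :\ set0 /\ forall x, x \in C :\ set0 -> #|c| <= #|x|.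
  by rewrite /c; case: arg_minnP.
move: cC; rewrite !inE => /andP [cn0 cC].
have cmin' : forall x, x \in C -> x != set0 -> #|c| <= #|x|.
  by move=> x xC xn0; apply: cmin; rewrite !inE xn0.
have [lin' card' dist'] := residual linC cC cn0 cmin'.
have Dw : D <= #|c| by apply: dist.
have := IH _ (A :\: c) ((#|c| + 1) %/ 2) lin' _ _ _.
have cA := sub _ cC.
rewrite cardsD (setIidPr cA).
have := subset_leq_card cA.
have := griesmer_mono k.+1 Dw; rewrite griesmerS.
move=> h1 h2 h3; apply: (leq_trans h1); rewrite griesmerS -(subnKC h2) leq_add2l.
apply: h3.
- rewrite -(leq_pmul2l (_ : 0 < 2)) // -expnS; exact: leq_trans cardC card'.
- move=> _ /imsetP [x xC ->]; apply: setSD; exact: sub.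
- move=> y yC yn0; have := dist' _ yC yn0; lia.
Qed.
End Sets.



Lemma F2cases (a : F2) : a = 0%R \/ a = 1%R.
Proof. case: a => [[|[|]]] //= H. left; exact/val_inj. right; exact/val_inj. Qed.

Lemma F2nat (m : nat) : ((m%:R : F2) = (odd m)%:R)%R.
Proof.
elim: m => // m IH; rewrite -natr1 IH /=.
by case: (odd m) => /=; apply/val_inj.
Qed.

Lemma F2b (a : F2) : (a = (a != 0)%:R)%R.
Proof. by case: (F2cases a) => ->. Qed.

Lemma F2sum n (f : 'I_n -> F2) : (\sum_i f i = (#|[set i | f i != 0]|)%:R)%R.
Proof.
rewrite -sum1_card natr_sum [RHS]big_mkcond /=; apply: eq_bigr => i _.
by rewrite inE; case: (F2cases (f i)) => ->; rewrite ?eqxx ?oner_eq0.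
Qed.

Definition supp n (x : 'rV[F2]_n) : {set 'I_n} := [set i | x ord0 i != 0%R].

Lemma wtE n (x : 'rV[F2]_n) : wt x = #|supp x|.
Proof. by []. Qed.

Lemma ipE n (x y : 'rV[F2]_n) :
  ((x *m y^T) ord0 ord0 = (#|supp x :&: supp y|)%:R)%R.
Proof.
rewrite !mxE F2sum; congr (_%:R)%R; apply: eq_card => i.
by rewrite !inE !mxE mulf_eq0 negb_or.
Qed.

Lemma mx11_eq0 (M : 'M[F2]_1) : (M == 0%R) = (M ord0 ord0 == 0%R).
Proof.
apply/eqP/eqP => [->|h]; first by rewrite mxE.
by apply/matrixP => i j; rewrite !ord1 h mxE.
Qed.

Lemma ip0_even n (x y : 'rV[F2]_n) : (x *m y^T)%R = 0%R -> ~~ odd #|supp x :&: supp y|.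
Proof.
move=> /eqP; rewrite mx11_eq0 ipE F2nat.
by case: (odd _) => //=; rewrite oner_eq0.
Qed.

Lemma supp_inj n : injective (@supp n).
Proof.
move=> x y /setP h; apply/rowP => i; move: (h i); rewrite !inE.
by case: (F2cases (x ord0 i)) => ->; case: (F2cases (y ord0 i)) => -> //=; rewrite ?eqxx ?oner_eq0.
Qed.

Lemma supp0 n : supp (0 : 'rV[F2]_n)%R = set0.
Proof. by apply/setP => i; rewrite !inE mxE eqxx. Qed.

Lemma suppD n (x y : 'rV[F2]_n) : supp (x + y)%R = sd (supp x) (supp y).
Proof.
apply/setP => i; rewrite !inE mxE.
case: (F2cases (x ord0 i)) => ->; case: (F2cases (y ord0 i)) => -> //=;
  rewrite ?add0r ?addr0 ?eqxx ?oner_eq0 //=.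
Qed.

Definition codeS k n (G : 'M[F2]_(k, n)) := [set x : 'rV[F2]_n | in_code G x].
Definition SC k n (G : 'M[F2]_(k, n)) := [set supp x | x in codeS G].

Lemma in_codeP k n (G : 'M[F2]_(k, n)) x : reflect (exists u : 'rV_k, x = (u *m G)%R) (in_code G x).
Proof. exact: submxP. Qed.

Lemma card_codeS k n (G : 'M[F2]_(k, n)) : row_free G -> #|codeS G| = 2 ^ k.
Proof.
move=> rf.
have -> : codeS G = [set (u *m G)%R | u : 'rV[F2]_k].
  apply/setP => x; rewrite inE; apply/in_codeP/imsetP => [[u ->]|[u _ ->]]; by exists u.
rewrite card_imset; last exact: row_free_inj.
by rewrite card_mx card_Fp // mul1n.
Qed.

Lemma SC_lin k n (G : 'M[F2]_(k, n)) : lin (SC G).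
Proof.
split.
- by apply/imsetP; exists 0%R; rewrite ?supp0 // inE /in_code sub0mx.
- move=> _ _ /imsetP [x xC ->] /imsetP [y yC ->]; rewrite -suppD.
  apply/imsetP; exists (x + y)%R => //; move: xC yC; rewrite !inE /in_code.
  exact: addmx_sub.
Qed.

Lemma card_SC k n (G : 'M[F2]_(k, n)) : row_free G -> #|SC G| = 2 ^ k.
Proof.
move=> rf; rewrite card_in_imset ?card_codeS //.
by move=> x y _ _; apply: supp_inj.
Qed.

Lemma mindist_le k n (G : 'M[F2]_(k, n)) y : in_code G y -> y != 0%R -> mindist G <= wt y.
Proof. by move=> yc yn; rewrite /mindist; apply: bigmin_le; rewrite yc yn. Qed.

Lemma wt_le n (x : 'rV[F2]_n) : wt x <= n.
Proof. by rewrite wtE; apply: leq_trans (max_card _) _; rewrite card_ord. Qed.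

Lemma mindist_attained k n (G : 'M[F2]_(k, n)) : 0 < k -> row_free G ->
  exists x, [/\ in_code G x, x != 0%R & wt x = mindist G].
Proof.
case: k G => // k G _ rf.
have h0 : in_code G (row ord0 G) by exact: row_sub.
have h1 : row ord0 G != 0%R.
  rewrite rowE mulmx_free_eq0 //; apply/eqP => /matrixP /(_ ord0 ord0).
  by rewrite !mxE eqxx /= => /eqP; rewrite oner_eq0.
have [z /andP [zc zn] hz] := @bigmin_attained _ (fun x => in_code G x && (x != 0%R)) (@wt n) n (row ord0 G) (introT andP (conj h0 h1)) (wt_le _).
by exists z; split => //; rewrite /mindist hz.
Qed.

Lemma SO_even k n (G : 'M[F2]_(k, n)) x : self_orthogonal G -> in_code G x -> ~~ odd (wt x).
Proof. by move=> so xc; have := ip0_even (so _ _ xc xc); rewrite setIid. Qed.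



Lemma SC_dist k n (G : 'M[F2]_(k, n)) s : s \in SC G -> s != set0 -> mindist G <= #|s|.
Proof.
case/imsetP => x; rewrite inE => xc -> sn.
apply: mindist_le => //; apply: contraNneq sn => ->; by rewrite supp0.
Qed.

Lemma ub k N D (G : 'M[F2]_(k, N)) : 0 < k -> row_free G -> self_orthogonal G ->
  N < griesmer k (D + 2) -> ~~ odd D -> mindist G <= D.
Proof.
move=> kp rf so hN hD.
have [x0 [x0c x0n hw]] := mindist_attained kp rf.
have ev := SO_even so x0c; rewrite hw in ev.
have g := @griesmer_sets _ k (SC G) setT (mindist G) (SC_lin G) _ _ _.
rewrite cardsT card_ord in g.
have {g} g := g (eq_leq (esym (card_SC rf))) (fun x _ => subsetT x) (@SC_dist _ _ G).
rewrite leqNgt; apply/negP => lt.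
have : D + 2 <= mindist G.
  have e1 : mindist G %% 2 = 0 by rewrite modn2 (negbTE ev).
  have e2 : D %% 2 = 0 by rewrite modn2 (negbTE hD).
  lia.
move/(griesmer_mono k) => h; lia.
Qed.



Lemma D_even k n D (G : 'M[F2]_(k, n)) : 0 < k -> row_free G -> self_orthogonal G ->
  mindist G = D -> ~~ odd D.
Proof.
move=> kp rf so hD; have [x0 [x0c _ hw]] := mindist_attained kp rf.
by rewrite -hD -hw (SO_even so x0c).
Qed.

Lemma D_mod4 k n D (G : 'M[F2]_(k.+2, n)) : n = griesmer k.+2 D -> row_free G ->
  self_orthogonal G -> mindist G = D -> D %% 4 = 0.
Proof.
move=> hn rf so hD.
have ev : D %% 2 = 0 by rewrite modn2 (negbTE (D_even _ rf so hD)).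
have [x0 [x0c x0n hw]] := mindist_attained (isT : 0 < k.+2) rf.
pose c := supp x0.
have cC : c \in SC G by apply/imsetP; exists x0; rewrite ?inE.
have cn0 : c != set0 by apply: contraNneq x0n; rewrite -(supp0 n) => /supp_inj ->.
have cw : #|c| = D by rewrite -hD -hw.
have cmin : forall s, s \in SC G -> s != set0 -> #|c| <= #|s|.
  by move=> s sC sn; rewrite cw -hD; apply: SC_dist.
have [lin' card' dist'] := residual (SC_lin G) cC cn0 cmin.
have evy : forall y, y \in [set s :\: c | s in SC G] -> #|y| %% 2 = 0.
  move=> _ /imsetP [_ /imsetP [x xc ->] ->].
  rewrite inE in xc.
  have h1 := ip0_even (so _ _ xc x0c).
  have h2 := SO_even so xc.
  have h3 := cardsID (supp x0) (supp x).
  rewrite wtE in h2.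
  have e1 : #|supp x :&: supp x0| %% 2 = 0 by rewrite modn2 (negbTE h1).
  have e2 : #|supp x| %% 2 = 0 by rewrite modn2 (negbTE h2).
  rewrite -h3 in e2; rewrite /c; lia.
case: (D %% 4 =P 0) => // h4.
have D4 : D %% 4 = 2 by lia.
have g : griesmer k.+1 (D %/ 2 + 1) <= #|setT :\: c|.
  apply: (griesmer_sets lin').
  - rewrite -(leq_pmul2l (_ : 0 < 2)) // -expnS; apply: leq_trans card'.
    by rewrite card_SC.
  - move=> _ /imsetP [s sC ->]; apply: setSD; exact: subsetT.
  - move=> y yC yn; have := dist' _ yC yn; have := evy _ yC; rewrite cw; lia.
rewrite setTD in g; have hc := cardsC c; rewrite card_ord in hc.
rewrite griesmerS in hn.
have e : (D + 1) %/ 2 = D %/ 2 by lia.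
rewrite e in hn.
have s := griesmer_strict (D %/ 2) (isT : 0 < k.+1).
rewrite addn1 in g.
lia.
Qed.

Lemma pigeon k n (G : 'M[F2]_(k, n)) : 2 ^ k < n ->
  exists j1 j2 : 'I_n, j1 != j2 /\ forall i, G i j1 = G i j2.
Proof.
move=> hn; pose f := fun j : 'I_n => col j G.
have : ~~ injectiveb f.
  apply/negP => /injectiveP inj; have := leq_card f inj.
  rewrite card_ord card_mx card_Fp // muln1; lia.
case/injectivePn => j1 [j2 ne eq]; exists j1, j2; split => // i.
by move/matrixP: eq => /(_ i ord0); rewrite !mxE.
Qed.




Lemma phi_exists n N (K : {set 'I_n}) : #|K| <= N ->
  exists phi : 'I_N -> option 'I_n,
  [/\ forall j a, phi j = Some a -> a \in K,
      forall j j' a, phi j = Some a -> phi j' = Some a -> j = j'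
    & forall a, a \in K -> exists j, phi j = Some a].
Proof.
move=> hKN.
exists (fun j : 'I_N => if (insub (val j) : option 'I_#|K|) is Some i then Some (enum_val i) else None).
split.
- move=> j a; case: insubP => // i _ _ [<-]; exact: enum_valP.
- move=> j j' a; case: insubP => // i _ hi [ha]; case: insubP => // i' _ hi' [ha'].
  apply: val_inj; rewrite /= -hi -hi'; congr val; apply: enum_val_inj; by rewrite ha ha'.
- move=> a aK; exists (widen_ord hKN (enum_rank_in aK a)).
  by rewrite /= valK enum_rankK_in.
Qed.

Section Constr.
Variables (k n N : nat) (G0 : 'M[F2]_(k, n)) (j1 j2 : 'I_n) (phi : 'I_N -> option 'I_n).
Hypotheses (ne : j1 != j2) (colEq : forall i, G0 i j1 = G0 i j2)
  (phiK : forall j a, phi j = Some a -> a \in ~: [set j1; j2])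
  (phiinj : forall j j' a, phi j = Some a -> phi j' = Some a -> j = j')
  (phisurj : forall a, a \in ~: [set j1; j2] -> exists j, phi j = Some a).

Definition tr (x : 'rV[F2]_n) : 'rV[F2]_N :=
  \row_j (if phi j is Some a then x ord0 a else 0%R).
Definition Gc : 'M[F2]_(k, N) :=
  \matrix_(i, j) (if phi j is Some a then G0 i a else 0%R).

Lemma trE x j : tr x ord0 j = if phi j is Some a then x ord0 a else 0%R.
Proof. by rewrite mxE. Qed.

Lemma mulGc (u : 'rV[F2]_k) : (u *m Gc)%R = tr (u *m G0)%R.
Proof.
apply/rowP => j; rewrite !mxE; under eq_bigr => i _ do rewrite mxE.
case: (phi j) => [a|].
- by rewrite mxE; apply: eq_bigr => i _.
- by apply: big1 => i _; rewrite mulr0.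
Qed.

Lemma tr0 : tr 0%R = 0%R.
Proof. by apply/rowP => j; rewrite !mxE; case: (phi j) => // a; rewrite mxE. Qed.

Lemma code_eq x : in_code G0 x -> x ord0 j1 = x ord0 j2.
Proof.
case/in_codeP => u ->; rewrite !mxE; apply: eq_bigr => i _; by rewrite colEq.
Qed.

Lemma count_tr (p : F2 -> F2 -> bool) (x y : 'rV[F2]_n) : p 0%R 0%R = false ->
  x ord0 j1 = x ord0 j2 -> y ord0 j1 = y ord0 j2 ->
  #|[set a | p (x ord0 a) (y ord0 a)]| =
  2 * p (x ord0 j1) (y ord0 j1) + #|[set j | p (tr x ord0 j) (tr y ord0 j)]|.
Proof.
move=> p00 hx hy.
rewrite -(cardsID [set j1; j2] [set a | p (x ord0 a) (y ord0 a)]).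
congr (_ + _).
- case h: (p (x ord0 j1) (y ord0 j1)).
  + have -> : [set a | p (x ord0 a) (y ord0 a)] :&: [set j1; j2] = [set j1; j2].
      apply/setP => a; rewrite !inE.
      case: (eqVneq a j1) => [->|_]; first by rewrite h.
      case: (eqVneq a j2) => [->|_]; last by rewrite andbF.
      by rewrite -hx -hy h.
    by rewrite cards2 ne.
  + have -> : [set a | p (x ord0 a) (y ord0 a)] :&: [set j1; j2] = set0.
      apply/setP => a; rewrite !inE.
      case: (eqVneq a j1) => [->|_]; first by rewrite h.
      case: (eqVneq a j2) => [->|_]; last by rewrite andbF.
      by rewrite -hx -hy h.
    by rewrite cards0.
- pose f := fun j => odflt j1 (phi j).
  have Ssome : forall j, j \in [set j | p (tr x ord0 j) (tr y ord0 j)] ->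
      exists a, phi j = Some a.
    move=> j; rewrite inE !trE; case: (phi j) => [a|]; first by exists a.
    by rewrite p00.
  have finj : {in [set j | p (tr x ord0 j) (tr y ord0 j)] &, injective f}.
    move=> j j' hj hj'; have [a ha] := Ssome _ hj; have [a' ha'] := Ssome _ hj'.
    rewrite /f ha ha' /= => eaa; rewrite -eaa in ha'; exact: phiinj ha ha'.
  rewrite -(card_in_imset finj); apply: eq_card => a.
  apply/idP/idP.
  + rewrite !inE => /andP [ha hp].
    have [j hj] : exists j, phi j = Some a by apply: phisurj; rewrite !inE.
    apply/imsetP; exists j; last by rewrite /f hj.
    by rewrite inE !trE hj.
  + case/imsetP => j hj ->; have [a' ha'] := Ssome _ hj.
    move: hj; rewrite inE !trE /f ha' /= => hp.
    have := phiK ha'; rewrite !inE => ->; exact: hp.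
Qed.

Lemma wt_tr (x : 'rV[F2]_n) : x ord0 j1 = x ord0 j2 -> wt x = 2 * (x ord0 j1 != 0%R) + wt (tr x).
Proof.
move=> hx; rewrite /wt (@count_tr (fun a _ => a != 0%R) x x) //=; by rewrite eqxx.
Qed.

Lemma ip_tr (x y : 'rV[F2]_n) : x ord0 j1 = x ord0 j2 -> y ord0 j1 = y ord0 j2 ->
  (tr x *m (tr y)^T)%R = (x *m y^T)%R.
Proof.
move=> hx hy; apply/matrixP => i j; rewrite !ord1 !ipE.
have e : forall m (z w : 'rV[F2]_m), supp z :&: supp w = [set a | (z ord0 a != 0%R) && (w ord0 a != 0%R)].
  by move=> m z w; apply/setP => a; rewrite !inE.
rewrite !e (@count_tr (fun a b => (a != 0%R) && (b != 0%R)) x y) ?eqxx //.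
by rewrite [in RHS]F2nat [in LHS]F2nat oddD oddM.
Qed.

Lemma Gc_code y : in_code Gc y -> exists x, in_code G0 x /\ y = tr x.
Proof.
case/in_codeP => u ->; exists (u *m G0)%R; split; first exact: submxMl.
exact: mulGc.
Qed.

Lemma Gc_SO : self_orthogonal G0 -> self_orthogonal Gc.
Proof.
move=> so y1 y2 /Gc_code [x1 [c1 ->]] /Gc_code [x2 [c2 ->]].
rewrite ip_tr ?code_eq //; exact: so.
Qed.

Lemma Gc_dist D : mindist G0 = D -> D - 2 <= N -> D - 2 <= mindist Gc.
Proof.
move=> hD hN; rewrite /mindist; apply: bigmin_ge => // y /andP [yc yn].
have [x [xc ex]] := Gc_code yc.
have xn : x != 0%R by apply: contraNneq yn => h; rewrite ex h tr0.
have := mindist_le xc xn; rewrite hD (wt_tr (code_eq xc)) -ex.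
case: (x ord0 j1 != 0%R) => /=; lia.
Qed.

Lemma Gc_free D : row_free G0 -> mindist G0 = D -> 3 <= D -> row_free Gc.
Proof.
move=> rf hD hD3; rewrite -kermx_eq0; apply/eqP/row_matrixP => i; rewrite row0.
set u := row i (kermx Gc).
have : (u *m Gc)%R = 0%R by apply/sub_kermxP; exact: row_sub.
rewrite mulGc => h.
have xc : in_code G0 (u *m G0)%R by exact: submxMl.
case: (eqVneq (u *m G0)%R 0%R) => [|xn].
  by move/eqP; rewrite mulmx_free_eq0 // => /eqP.
have := mindist_le xc xn; rewrite hD (wt_tr (code_eq xc)) h.
have -> : wt (0 : 'rV[F2]_N)%R = 0 by rewrite wtE supp0 cards0.
case: (_ != 0%R) => /=; lia.
Qed.
End Constr.


Lemma D_mod4' k n D (G : 'M['F_2]_(k, n)) : 1 < k -> n = griesmer k D -> row_free G ->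
  self_orthogonal G -> mindist G = D -> D %% 4 = 0.
Proof. case: k G => [|[|k]] G // _; exact: D_mod4. Qed.

Theorem lemma5p5 (k d : nat) (hk : 1 <= k) :
  (exists G : 'M['F_2]_(k, griesmer k (d + 4)),
      is_code G /\ self_orthogonal G /\ mindist G = d + 4) ->
  2 ^ k < griesmer k (d + 4) ->
  forall N : nat, griesmer k (d + 2) + 1 <= N <= griesmer k (d + 4) - 1 ->
    dso_eq N k (d + 2).
Proof.
move=> [G0 [rf0 [so0 hD0]]] hbig N /andP [hN1 hN2].
have ev := D_even hk rf0 so0 hD0.
have dev : ~~ odd (d + 2) by move: ev; rewrite !oddD.
have hNlt : N < griesmer k (d + 2 + 2).
  have -> : d + 2 + 2 = d + 4 by lia.
  have : 0 < 2 ^ k by rewrite expn_gt0.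
  lia.
have UB : forall G : 'M['F_2]_(k, N), is_code G -> self_orthogonal G -> mindist G <= d + 2.
  by move=> G rf so; apply: ub.
split => //.
have hsmall : griesmer k (d + 4) <= griesmer k (d + 2) + 3.
  case: (ltnP 1 k) => hk2.
  - have h4 := D_mod4' hk2 (erefl _) rf0 so0 hD0.
    have e1 : d + 4 = 4 * (d %/ 4) + 4 by lia.
    have e2 : d + 2 = 4 * (d %/ 4) + 2 by lia.
    by rewrite e1 e2 griesmer_diff.
  - have -> : k = 1 by lia.
    by rewrite !griesmer1; lia.
have [j1 [j2 [ne colEq]]] := pigeon G0 hbig.
have cK : #|~: [set j1; j2]| <= N.
  have := cardsC [set j1; j2]; rewrite cards2 ne card_ord; lia.
have [phi [phiK phiinj phisurj]] := phi_exists cK.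
exists (Gc G0 phi); split; last split.
- apply: (Gc_free ne colEq phiK phiinj phisurj rf0 hD0); lia.
- exact: (Gc_SO ne colEq phiK phiinj phisurj so0).
- apply/eqP; rewrite eqn_leq; apply/andP; split.
  + apply: UB; last exact: (Gc_SO ne colEq phiK phiinj phisurj so0).
    apply: (Gc_free ne colEq phiK phiinj phisurj rf0 hD0); lia.
  + have := Gc_dist ne colEq phiK phiinj phisurj hD0 (_ : d + 4 - 2 <= N).
    have -> : d + 4 - 2 = d + 2 by lia.
    apply; have := griesmer_ge (d + 2) hk; lia.
Qed.
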